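(* Let $\Theta$ be a finite set, let $P_1,\dots,P_m$ be experiments, and let $(A,u)$ be a decision problem admitting a weak decomposition $(A_1,u_1),\dots,(A_k,u_k)$. Then $$V(P_1,\dots,P_m;(A,u))\ge\sum_{\ell=1}^kV(P_1,\dots,P_m;(A_\ell,u_\ell)).$$
   Context: $\Theta$ is a finite set of states. A decision problem is a pair $(A,u)$ with $A$ a finite nonempty action set and $u:\Theta\times A\to\mathbb{R}$; for $\alpha\in\Delta(A)$ write $u(\theta,\alpha)=\sum_a\alpha(a)u(\theta,a)$. An experiment is a map $P:\Theta\to\Delta(Y)$ with $Y$ a finite signal set. Given experiments $P_j:\Theta\to\Delta(Y_j)$, $j=1,\dots,m$, let $\mathbf Y=Y_1\times\cdots\times Y_m$ and let $\mathcal P(P_1,\dots,P_m)$ be the set of experiments $P:\Theta\to\Delta(\mathbf Y)$ whose $j$-th marginal is $P_j(\cdot|\theta)$ for every $\theta$ and $j$. A strategy is a map $\sigma:\mathbf Y\to\Delta(A)$. Define $V(P_1,\dots,P_m;(A,u))=\max_{\sigma}\min_{P\in\mathcal P(P_1,\dots,P_m)}\sum_{\theta}\sum_{\mathbf y}P(\mathbf y|\theta)u(\theta,\sigma(\mathbf y))$. The composition $\bigoplus_{\ell=1}^k(A_\ell,u_\ell)$ is the decision problem with action set $A_1\times\cdots\times A_k$ and utility $u(\theta,(a_1,\dots,a_k))=\sum_\ell u_\ell(\theta,a_\ell)$. For a decision problem let $\mathcal H(A,u)=\mathrm{co}\{u(\cdot,a):a\in A\}-\mathbb{R}_+^{\Theta}$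 (Minkowski difference). A decision problem $(A,u)$ admits a weak decomposition $\{(A_\ell,u_\ell)\}_{\ell=1}^k$ if $\mathcal H(\bigoplus_{\ell=1}^k(A_\ell,u_\ell))\subseteq\mathcal H(A,u)$. *)

(* Defs.v *)
From mathcomp Require Import all_boot all_order all_algebra.
From mathcomp Require Import all_classical all_reals.
Set Implicit Arguments. Unset Strict Implicit. Unset Printing Implicit Defensive.
Import Order.TTheory GRing.Theory Num.Theory.
Local Open Scope classical_set_scope.
Local Open Scope ring_scope.

Definition is_dist (R : numDomainType) (T : finType) (p : T -> R) : Prop :=
  (forall t, 0 <= p t) /\ \sum_(t : T) p t = 1.

Definition experiment (R : numDomainType) (Th Y : finType) (P : Th -> Y -> R) : Prop :=
  forall th, is_dist (P th).

Definition sigprod (m : nat) (Y : 'I_m -> finType) := {dffun forall j : 'I_m, Y j}.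

Definition couplings (R : numDomainType) (Th : finType) (m : nat) (Y : 'I_m -> finType)
  (Ps : forall j : 'I_m, Th -> Y j -> R) : set (Th -> sigprod Y -> R) :=
  [set P | experiment P /\
     forall (th : Th) (j : 'I_m) (y : Y j),
       \sum_(ys : sigprod Y | ys j == y) P th ys = Ps j th y].

Definition strategies (R : numDomainType) (m : nat) (Y : 'I_m -> finType) (A : finType)
  : set (sigprod Y -> A -> R) :=
  [set s | forall ys, is_dist (s ys)].

Definition mixed_u (R : numDomainType) (Th A : finType) (u : Th -> A -> R)
  (th : Th) (al : A -> R) : R := \sum_(a : A) al a * u th a.

Definition payoff (R : numDomainType) (Th : finType) (m : nat) (Y : 'I_m -> finType)
  (A : finType) (u : Th -> A -> R) (s : sigprod Y -> A -> R) (P : Th -> sigprod Y -> R) : R :=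
  \sum_(th : Th) \sum_(ys : sigprod Y) P th ys * mixed_u u th (s ys).

(* V(P_1,...,P_m; (A,u)) = max_sigma min_{P in P(P_1..P_m)} payoff;
   written with sup/inf (the max and min are attained). *)
Definition V (R : realType) (Th : finType) (m : nat) (Y : 'I_m -> finType)
  (Ps : forall j : 'I_m, Th -> Y j -> R) (A : finType) (u : Th -> A -> R) : R :=
  sup [set inf [set payoff u s P | P in couplings Ps] | s in @strategies R m Y A].

Definition comp_actions (k : nat) (Al : 'I_k -> finType) := {dffun forall l : 'I_k, Al l}.

Definition comp_u (R : numDomainType) (Th : finType) (k : nat) (Al : 'I_k -> finType)
  (ul : forall l : 'I_k, Th -> Al l -> R) : Th -> comp_actions Al -> R :=
  fun th a => \sum_(l < k) ul l th (a l).

(* H(A,u) = co{u(.,a) : a in A} - R_+^Theta *)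
Definition Hset (R : numDomainType) (Th A : finType) (u : Th -> A -> R) : set (Th -> R) :=
  [set x | exists al : A -> R, is_dist al /\ forall th, x th <= mixed_u u th al].

Definition weak_decomposition (R : numDomainType) (Th A : finType) (u : Th -> A -> R)
  (k : nat) (Al : 'I_k -> finType) (ul : forall l : 'I_k, Th -> Al l -> R) : Prop :=
  Hset (comp_u ul) `<=` Hset u.

(* Main.v *)
Require Import Defs.
From mathcomp Require Import all_boot all_order all_algebra.
From mathcomp Require Import all_classical all_reals.
Import Order.TTheory GRing.Theory Num.Theory.
Local Open Scope ring_scope.
Set Implicit Arguments. Unset Strict Implicit. Unset Printing Implicit Defensive.

Lemma prod_sum_dffun (R : comNzRingType) (k : nat) (T : 'I_k -> finType)
  (f : forall i, T i -> R) :
  \sum_(a : {dffun forall i, T i}) \prod_i f i (a i) = \prod_i \sum_(b : T i) f i b.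
Proof.
under [RHS]eq_bigr => i _ do rewrite (big_tag (fun i => f i) i).
rewrite bigA_distr_big_dep.
rewrite (reindex (@dffun_of_fprod _ T)); last exact/onW_bij/dffun_of_fprod_bij.
have := @big_fprod _ 0 1 *%R +%R _ T (fun i => [ffun b => f i b]).
move=> H.
transitivity (\sum_(t : fprod T) \prod_(i in 'I_k) [ffun b => f i b] (t i)).
  by apply: eq_bigr => t _; apply: eq_bigr => i _; rewrite !ffunE.
rewrite H; apply: eq_big => // g _; apply: eq_bigr => i _.
by case: (g i) => j x /=; rewrite /untag; case: eqP => // e; rewrite ffunE.
Qed.

Lemma marg_dffun (R : comNzRingType) (k : nat) (T : 'I_k -> finType)
  (f : forall i, T i -> R) (l : 'I_k) (b : T l) :
  \sum_(a : {dffun forall i, T i} | a l == b) \prod_i f i (a i) =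
  f l b * \prod_(i | i != l) \sum_(b' : T i) f i b'.
Proof.
pose g i (b' : T i) := if (i != l) || (Tagged T b' == Tagged T b) then f i b' else 0.
have := @prod_sum_dffun _ _ T g.
rewrite [in X in _ = X -> _](bigD1 l) //=.
have E1 : \sum_b0 g l b0 = f l b.
  rewrite (bigD1 b) //= /g eqxx /= eqxx big1 ?addr0 // => b' Hb'.
  by rewrite eq_Tagged /= (negbTE Hb').
have E2 : \prod_(i < k | i != l) \sum_b0 g i b0 = \prod_(i < k | i != l) \sum_b' f i b'.
  by apply: eq_bigr => i Hi; apply: eq_bigr => b' _; rewrite /g Hi.
rewrite E1 E2 => <-; rewrite big_mkcond /=; apply: eq_bigr => a _.
case: eqP => [Hab|Hab].
  apply: eq_bigr => i _; rewrite /g; case: (i =P l) => //= ?; subst i.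
  by rewrite eq_Tagged /= Hab eqxx.
rewrite (bigD1 l) //= /g eqxx /= eq_Tagged /=.
by case: eqP => // ?; rewrite mul0r.
Qed.

Lemma dist_le1 (R : numDomainType) (T : finType) (p : T -> R) t :
  is_dist p -> p t <= 1.
Proof.
move=> [p0 p1]; rewrite -p1 (bigD1 t) //= lerDl; exact: sumr_ge0.
Qed.

Lemma mixed_bound (R : numDomainType) (Th A : finType) (u : Th -> A -> R) th al :
  is_dist al -> `|mixed_u u th al| <= \sum_a `|u th a|.
Proof.
move=> Hal; rewrite /mixed_u; apply: le_trans (ler_norm_sum _ _ _) _.
apply: ler_sum => a _; rewrite normrM ger0_norm; last exact: Hal.1.
by apply: ler_piMl => //; exact: dist_le1.
Qed.

Definition Bnd (R : numDomainType) (Th A : finType) (u : Th -> A -> R) : R :=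
  \sum_th \sum_a `|u th a|.

Lemma payoff_bound (R : realType) (Th : finType) (m : nat) (Y : 'I_m -> finType)
  (A : finType) (u : Th -> A -> R) s P :
  @strategies R m Y A s -> experiment P -> `|payoff u s P| <= Bnd u.
Proof.
move=> Hs HP; rewrite /payoff /Bnd; apply: le_trans (ler_norm_sum _ _ _) _.
apply: ler_sum => th _; apply: le_trans (ler_norm_sum _ _ _) _.
apply: (@le_trans _ _ (\sum_ys P th ys * \sum_a `|u th a|)).
  apply: ler_sum => ys _; rewrite normrM ger0_norm; last exact: (HP th).1.
  apply: ler_wpM2l; first exact: (HP th).1.
  exact: mixed_bound.
by rewrite -mulr_suml (HP th).2 mul1r.
Qed.

Lemma prod_coupling (R : realType) (Th : finType) (m : nat) (Y : 'I_m -> finType)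
  (Ps : forall j : 'I_m, Th -> Y j -> R) (HPs : forall j : 'I_m, experiment (Ps j)) :
  couplings Ps (fun th (ys : sigprod Y) => \prod_j Ps j th (ys j)).
Proof.
split.
  move=> th; split.
    by move=> ys; apply: prodr_ge0 => j _; exact: (HPs j th).1.
  rewrite (@prod_sum_dffun _ _ Y (fun j => Ps j th)).
  by apply: big1 => j _; exact: (HPs j th).2.
move=> th j y.
rewrite (@marg_dffun _ _ Y (fun j => Ps j th)) big1 ?mulr1 // => i _.
exact: (HPs i th).2.
Qed.

Section Main.
Unset Implicit Arguments.
Local Open Scope classical_set_scope.
Variables (R : realType) (Th : finType) (m : nat) (Y : 'I_m -> finType)
  (Ps : forall j : 'I_m, Th -> Y j -> R) (HPs : forall j : 'I_m, experiment (Ps j)).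

Definition Eset (A : finType) (u : Th -> A -> R) (s : sigprod Y -> A -> R) : set R :=
  [set payoff u s P | P in couplings Ps].
Arguments Eset {A} u s.

Lemma Eset_n0 (A : finType) (u : Th -> A -> R) s : Eset u s !=set0.
Proof.
exists (payoff u s (fun th (ys : sigprod Y) => \prod_j Ps j th (ys j))).
by exists (fun th (ys : sigprod Y) => \prod_j Ps j th (ys j)) => //; exact: prod_coupling.
Qed.

Lemma Eset_lb (A : finType) (u : Th -> A -> R) s : @strategies R m Y A s ->
  lbound (Eset u s) (- Bnd u).
Proof.
move=> Hs x [P [HP _] <-]; rewrite lerNl.
apply: le_trans (payoff_bound u Hs HP); rewrite -normrN; exact: ler_norm.
Qed.

Lemma inf_bounds (A : finType) (u : Th -> A -> R) s : @strategies R m Y A s ->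
  - Bnd u <= inf (Eset u s) /\ inf (Eset u s) <= Bnd u.
Proof.
move=> Hs; split; first by apply: lb_le_inf; [exact: Eset_n0 | exact: Eset_lb].
have [x Ex] := Eset_n0 _ u s.
apply: le_trans (ge_inf _ Ex) _; first by exists (- Bnd u); exact: Eset_lb.
case: Ex => P [HP _] <-; apply: le_trans (payoff_bound u Hs HP); exact: ler_norm.
Qed.

Definition Vset (A : finType) (u : Th -> A -> R) : set R :=
  [set inf (Eset u s) | s in @strategies R m Y A].
Arguments Vset {A} u.

Lemma V_ub (A : finType) (u : Th -> A -> R) : ubound (Vset u) (Bnd u).
Proof. by move=> x [s Hs <-]; case: (inf_bounds _ u s Hs). Qed.

Lemma V_ge (A : finType) (u : Th -> A -> R) s : @strategies R m Y A s ->
  inf (Eset u s) <= V Ps u.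
Proof.
move=> Hs; rewrite /V; apply: ub_le_sup; first by exists (Bnd u); exact: V_ub.
by exists s.
Qed.

Lemma V_has_sup (A : finType) (u : Th -> A -> R) : (0 < #|A|)%N -> has_sup (Vset u).
Proof.
case/card_gt0P => a0 _; split; last by exists (Bnd u); exact: V_ub.
pose s := fun (ys : sigprod Y) (a : A) => if a == a0 then 1 else 0 : R.
have Hs : @strategies R m Y A s.
  move=> ys; split; first by move=> a; rewrite /s; case: eqP.
  by rewrite /s -big_mkcond /= big_pred1_eq.
by exists (inf (Eset u s)); exists s.
Qed.

End Main.

Lemma comp_mixed (R : realType) (Th : finType) (k : nat) (Al : 'I_k -> finType)
  (ul : forall l : 'I_k, Th -> Al l -> R) (al : forall l, Al l -> R)
  (Hal : forall l, is_dist (al l)) th :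
  is_dist (fun a : comp_actions Al => \prod_l al l (a l)) /\
  mixed_u (comp_u ul) th (fun a : comp_actions Al => \prod_l al l (a l)) =
  \sum_l mixed_u (ul l) th (al l).
Proof.
split.
  split; first by move=> a; apply: prodr_ge0 => l _; exact: (Hal l).1.
  rewrite (@prod_sum_dffun _ _ Al al); apply: big1 => l _; exact: (Hal l).2.
rewrite /mixed_u /comp_u.
under eq_bigr do rewrite mulr_sumr.
rewrite exchange_big; apply: eq_bigr => l _.
rewrite (partition_big (fun a : comp_actions Al => a l) predT) //=.
apply: eq_bigr => b _.
transitivity (\sum_(a : comp_actions Al | a l == b) (\prod_l0 al l0 (a l0)) * ul l th b).
  by apply: eq_big => // a /eqP ->.
by rewrite -mulr_suml (@marg_dffun _ _ Al al) big1 ?mulr1 // => i _; exact: (Hal i).2.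
Qed.

Theorem lemma7 (R : realType) (Th : finType) (m : nat) (Y : 'I_m -> finType)
  (Ps : forall j : 'I_m, Th -> Y j -> R) (HPs : forall j : 'I_m, experiment (Ps j))
  (A : finType) (hA : (0 < #|A|)%N) (u : Th -> A -> R)
  (k : nat) (Al : 'I_k -> finType) (hAl : forall l : 'I_k, (0 < #|Al l|)%N)
  (ul : forall l : 'I_k, Th -> Al l -> R)
  (Hdec : weak_decomposition u ul) :
  \sum_(l < k) V Ps (ul l) <= V Ps u.
Proof.
apply/ler_addgt0Pr => e e0.
set c := e / k.+1%:R.
have c0 : 0 < c by rewrite divr_gt0 // ltr0n.
have H : forall l : 'I_k, exists s : sigprod Y -> Al l -> R,
    @strategies R m Y (Al l) s /\
    V Ps (ul l) - c < inf (Eset R Th m Y Ps (Al l) (ul l) s).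
  move=> l; have [x [s Hs <-] Hx] := sup_adherent c0 (V_has_sup R Th m Y Ps HPs _ (ul l) (hAl l)).
  by exists s.
pose s l := projT1 (cid (H l)).
have Hs l : @strategies R m Y (Al l) (s l) /\
    V Ps (ul l) - c < inf (Eset R Th m Y Ps (Al l) (ul l) (s l)).
  exact: (projT2 (cid (H l))).
pose be (ys : sigprod Y) := fun a : comp_actions Al => \prod_l s l ys (a l).
have Hbe ys th := @comp_mixed R Th k Al ul (fun l => s l ys) (fun l => (Hs l).1 ys) th.
have H2 : forall ys : sigprod Y, exists al : A -> R, is_dist al /\
    forall th, mixed_u (comp_u ul) th (be ys) <= mixed_u u th al.
  move=> ys; apply: Hdec; exists (be ys); split; first split.
  - by move=> a; apply: prodr_ge0 => l _; exact: ((Hs l).1 ys).1.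
  - rewrite (@prod_sum_dffun _ _ Al (fun l => s l ys)).
    by apply: big1 => l _; exact: ((Hs l).1 ys).2.
  by move=> th.
case: (choice H2) => tau Htau.
have Htau_s : @strategies R m Y A tau by move=> ys; exact: (Htau ys).1.
have Hlow : \sum_l inf (Eset R Th m Y Ps (Al l) (ul l) (s l)) <=
            inf (Eset R Th m Y Ps A u tau).
  apply: lb_le_inf; first exact: Eset_n0.
  move=> x [P [HP HPm] <-].
  apply: (@le_trans _ _ (payoff (comp_u ul) be P)); last first.
    apply: ler_sum => th _; apply: ler_sum => ys _.
    apply: ler_wpM2l; first exact: (HP th).1.
    exact: (Htau ys).2.
  have -> : payoff (comp_u ul) be P = \sum_l payoff (ul l) (s l) P.
    rewrite /payoff.
    under eq_bigr => th _ do (under eq_bigr => ys _ do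
      rewrite (Hbe ys th).2 mulr_sumr; rewrite exchange_big).
    by rewrite exchange_big.
  apply: ler_sum => l _; apply: ge_inf.
    by exists (- Bnd (ul l)); exact: Eset_lb (Hs l).1.
  by exists P.
apply: (@le_trans _ _ (\sum_l (inf (Eset R Th m Y Ps (Al l) (ul l) (s l)) + c))).
  by apply: ler_sum => l _; rewrite -lerBlDr; apply/ltW; exact: (Hs l).2.
rewrite big_split /= sumr_const card_ord; apply: lerD.
  exact: le_trans Hlow (V_ge R Th m Y Ps HPs _ u tau Htau_s).
rewrite -mulr_natr; apply: (@le_trans _ _ (c * k.+1%:R)).
  by apply: ler_wpM2l; [apply/ltW | rewrite ler_nat].
by rewrite /c divfK // pnatr_eq0.
Qed.
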